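(* Let $\rho\in(0,1)$, $\xi\in\mathbb{R}$, and $H=\frac{1}{2(1-\rho\cos x)}\big(\sin^2x\,(P_x^2+P_y^2)+\xi\big)$ on $(x,y)\in(0,\pi)\times\mathbb{R}$. Consider the trajectories (''geodesics'') of the Hamiltonian flow of $H$ on the level set $H=0$, $P_y=1$, projected to the $(x,y)$-plane, each normalized by a translation in $y$. Then: (a) if $-1<\xi<0$, they are given by $\cosh y=\frac{\cos x}{\cos x_*}$ for $x\in(0,x_* )$ and by $\cosh y=\frac{\cos(\pi-x)}{\cos x_*}$ for $x\in(\pi-x_*,\pi)$; (b) if $\xi<-1$, they are given by $\epsilon\sinh y_\epsilon=\frac{\cos x}{\sinh\theta}$, $x\in(0,\pi)$, $\epsilon=\pm1$; (c) if $\xi=-1$, they are given by $e^{\epsilon y_\epsilon}=|\cos x|$, $x\in(0,\pi/2)\cup(\pi/2,\pi)$, $\epsilon=\pm1$; where $\sinh\theta=\sqrt{|\xi|-1}$ and $\cos x_*=\sqrt{1-|\xi|}$, and $y_\epsilon$ denotes the trajectory along which the sign of $P_x$ (equivalently of $\dot x$) is $\epsilon$.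
   Context: Trajectories are solutions of Hamilton's equations of $H$; the invariance of $H$ under $y\mapsto y+c$ allows normalizing $y$ (e.g. $y=0$ at the turning point $x=x_*$ in (a), at $x=\pi/2$ in (b), at $x\to0$ in (c)). *)

(* Defs.v *)
From Stdlib Require Import Reals.
From Coquelicot Require Import Coquelicot.
Open Scope R_scope.

Definition Ham (rho xi : R) (x y px py : R) : R :=
  (sin x ^ 2 * (px ^ 2 + py ^ 2) + xi) / (2 * (1 - rho * cos x)).

Definition open_interval (I : R -> Prop) : Prop :=
  (forall t, I t -> exists eps : posreal,
       forall s, Rabs (s - t) < eps -> I s) /\
  (forall a b t, I a -> I b -> a <= t <= b -> I t).

Definition trajectory (rho xi : R) (I : R -> Prop)
    (x y px py : R -> R) : Prop :=
  open_interval I /\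
  forall t, I t ->
    0 < x t < PI /\
    is_derive x t (Derive (fun p => Ham rho xi (x t) (y t) p (py t)) (px t)) /\
    is_derive y t (Derive (fun p => Ham rho xi (x t) (y t) (px t) p) (py t)) /\
    is_derive px t (- Derive (fun q => Ham rho xi q (y t) (px t) (py t)) (x t)) /\
    is_derive py t (- Derive (fun q => Ham rho xi (x t) q (px t) (py t)) (y t)) /\
    Ham rho xi (x t) (y t) (px t) (py t) = 0 /\
    py t = 1.

Definition xstar (xi : R) : R := acos (sqrt (1 - Rabs xi)).
Definition sinh_theta (xi : R) : R := sqrt (Rabs xi - 1).

(* Main.v *)
Require Import Defs.
From Stdlib Require Import Reals Lra.
From Coquelicot Require Import Coquelicot.
Open Scope R_scope.

Lemma Dpos rho q : 0 < rho < 1 -> 0 < 1 - rho * cos q.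
Proof. intros H. pose proof (COS_bound q). nra. Qed.

Lemma dHpx rho xi a b p d : 0 < rho < 1 ->
  Derive (fun p => Ham rho xi a b p d) p = sin a ^ 2 * p / (1 - rho * cos a).
Proof. intros H. pose proof (Dpos rho a H). apply is_derive_unique. unfold Ham.
  auto_derive. lra. field. lra. Qed.
Lemma dHpy rho xi a b p d : 0 < rho < 1 ->
  Derive (fun d => Ham rho xi a b p d) d = sin a ^ 2 * d / (1 - rho * cos a).
Proof. intros H. pose proof (Dpos rho a H). apply is_derive_unique. unfold Ham.
  auto_derive. lra. field. lra. Qed.
Lemma dHx rho xi a b p d : 0 < rho < 1 -> Ham rho xi a b p d = 0 ->
  Derive (fun a => Ham rho xi a b p d) a = sin a * cos a * (p^2+d^2) / (1 - rho * cos a).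
Proof. intros H H0. pose proof (Dpos rho a H). unfold Ham in H0.
  assert (N : sin a ^ 2 * (p ^ 2 + d ^ 2) + xi = 0).
  { apply (Rmult_eq_reg_r (/ (2 * (1 - rho * cos a)))). rewrite Rmult_0_l. exact H0.
    apply Rinv_neq_0_compat. lra. }
  apply is_derive_unique. unfold Ham. auto_derive. lra.
  replace xi with (- (sin a ^ 2 * (p ^ 2 + d ^ 2))) by lra. field. lra. Qed.

Lemma W_der (x y px : R -> R) t dx dy dp l :
  is_derive x t dx -> is_derive y t dy -> is_derive px t dp ->
  l = (exp (- y t) * (- dy * (cos (x t) - sin (x t) * px t) - sin (x t) * dx - cos (x t) * dx * px t - sin (x t) * dp)) ->
  is_derive (fun t => exp (- y t) * (cos (x t) - sin (x t) * px t)) t l.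
Proof. intros Hx Hy Hp ->. auto_derive.
  repeat split; eexists; eassumption.
  assert (Ex : Derive (fun z : R => x z) t = dx) by (apply is_derive_unique; exact Hx).
  assert (Ey : Derive (fun z : R => y z) t = dy) by (apply is_derive_unique; exact Hy).
  assert (Ep : Derive (fun z : R => px z) t = dp) by (apply is_derive_unique; exact Hp).
  rewrite Ex, Ey, Ep. ring. Qed.

Lemma V_der (x y px : R -> R) t dx dy dp l :
  is_derive x t dx -> is_derive y t dy -> is_derive px t dp ->
  l = (exp (y t) * (dy * (cos (x t) + sin (x t) * px t) - sin (x t) * dx + cos (x t) * dx * px t + sin (x t) * dp)) ->
  is_derive (fun t => exp (y t) * (cos (x t) + sin (x t) * px t)) t l.
Proof. intros Hx Hy Hp ->. auto_derive.
  repeat split; eexists; eassumption.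
  assert (Ex : Derive (fun z : R => x z) t = dx) by (apply is_derive_unique; exact Hx).
  assert (Ey : Derive (fun z : R => y z) t = dy) by (apply is_derive_unique; exact Hy).
  assert (Ep : Derive (fun z : R => px z) t = dp) by (apply is_derive_unique; exact Hp).
  rewrite Ex, Ey, Ep. ring. Qed.

Lemma const_on (I : R -> Prop) (f : R -> R) : Defs.open_interval I ->
  (forall t, I t -> is_derive f t 0) -> forall a b, I a -> I b -> f a = f b.
Proof.
  intros [_ HI] Hd.
  assert (K : forall a b, I a -> I b -> a < b -> f a = f b).
  { intros a b Ha Hb Hab. apply eq_is_derive; [|exact Hab].
    intros t Ht. apply Hd. exact (HI a b t Ha Hb Ht). }
  intros a b Ha Hb. destruct (Rtotal_order a b) as [H|[H|H]].
  - auto.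
  - subst; auto.
  - symmetry; auto.
Qed.

Lemma key rho xi I x y px py t : 0 < rho < 1 -> trajectory rho xi I x y px py -> I t ->
  0 < x t < PI /\
  is_derive x t (sin (x t) ^ 2 * px t / (1 - rho * cos (x t))) /\
  is_derive y t (sin (x t) ^ 2 / (1 - rho * cos (x t))) /\
  is_derive px t (- (sin (x t) * cos (x t) * (px t ^ 2 + 1) / (1 - rho * cos (x t)))) /\
  sin (x t) ^ 2 * (px t ^ 2 + 1) + xi = 0.
Proof.
  intros Hr [_ Ht] It. destruct (Ht t It) as (Hx0 & Hx & Hy & Hp & _ & H0 & Hpy).
  pose proof (Dpos rho (x t) Hr).
  rewrite dHpx in Hx by exact Hr. rewrite dHpy in Hy by exact Hr.
  rewrite (dHx _ _ _ _ _ _ Hr H0) in Hp. rewrite Hpy in Hy, Hp.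
  split; [exact Hx0|]. split; [exact Hx|]. split; [|split].
  - replace (sin (x t) ^ 2 / (1 - rho * cos (x t))) with (sin (x t) ^ 2 * 1 / (1 - rho * cos (x t))) by (field; lra). exact Hy.
  - replace (px t ^ 2 + 1) with (px t ^ 2 + 1 ^ 2) by ring. exact Hp.
  - unfold Ham in H0. rewrite Hpy in H0.
    apply (Rmult_eq_reg_r (/ (2 * (1 - rho * cos (x t))))). rewrite Rmult_0_l.
    replace (1 ^ 2) with 1 in H0 by ring. exact H0.
    apply Rinv_neq_0_compat. lra.
Qed.

Definition Wf (x y px : R -> R) t := exp (- y t) * (cos (x t) - sin (x t) * px t).
Definition Vf (x y px : R -> R) t := exp (y t) * (cos (x t) + sin (x t) * px t).

Lemma W_const rho xi I x y px py : 0 < rho < 1 -> trajectory rho xi I x y px py ->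
  forall a b, I a -> I b -> Wf x y px a = Wf x y px b.
Proof.
  intros Hr Ht. apply (const_on I (Wf x y px)). exact (proj1 Ht).
  intros t It. destruct (key _ _ _ _ _ _ _ t Hr Ht It) as (_ & Hx & Hy & Hp & _).
  pose proof (Dpos rho (x t) Hr).
  unfold Wf. eapply W_der; [exact Hx|exact Hy|exact Hp|]. field. lra.
Qed.

Lemma V_const rho xi I x y px py : 0 < rho < 1 -> trajectory rho xi I x y px py ->
  forall a b, I a -> I b -> Vf x y px a = Vf x y px b.
Proof.
  intros Hr Ht. apply (const_on I (Vf x y px)). exact (proj1 Ht).
  intros t It. destruct (key _ _ _ _ _ _ _ t Hr Ht It) as (_ & Hx & Hy & Hp & _).
  pose proof (Dpos rho (x t) Hr).
  unfold Vf. eapply V_der; [exact Hx|exact Hy|exact Hp|]. field. lra.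
Qed.

Lemma cW (x y px : R -> R) t : cos (x t) - sin (x t) * px t = exp (y t) * Wf x y px t.
Proof. unfold Wf. rewrite exp_Ropp. pose proof (exp_pos (y t)). field. lra. Qed.
Lemma cV (x y px : R -> R) t : cos (x t) + sin (x t) * px t = Vf x y px t / exp (y t).
Proof. unfold Vf. pose proof (exp_pos (y t)). field. lra. Qed.

Lemma exp_sub u v : exp (u - v) = exp u / exp v.
Proof. unfold Rminus, Rdiv. rewrite exp_plus, exp_Ropp. reflexivity. Qed.
Lemma cosh_alt u v : cosh (u - v) = (exp u / exp v + exp v / exp u) / 2.
Proof. unfold cosh. rewrite exp_sub. replace (- (u - v)) with (v - u) by ring.
  rewrite exp_sub. reflexivity. Qed.
Lemma sinh_alt u v : sinh (u - v) = (exp u / exp v - exp v / exp u) / 2.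
Proof. unfold sinh. rewrite exp_sub. replace (- (u - v)) with (v - u) by ring.
  rewrite exp_sub. reflexivity. Qed.

Lemma prodWV rho xi I x y px py t : 0 < rho < 1 -> trajectory rho xi I x y px py -> I t ->
  Wf x y px t * Vf x y px t = 1 + xi.
Proof.
  intros Hr Ht It. destruct (key _ _ _ _ _ _ _ t Hr Ht It) as (_ & _ & _ & _ & Hc).
  pose proof (exp_pos (y t)) as Ha.
  assert (E1 := cW x y px t). assert (E2 := cV x y px t).
  pose proof (sin2_cos2 (x t)). unfold Rsqr in *.
  assert (Wf x y px t = (cos (x t) - sin (x t) * px t) / exp (y t)) by (rewrite E1; field; lra).
  assert (Vf x y px t = (cos (x t) + sin (x t) * px t) * exp (y t)) by (rewrite E2; field; lra).
  rewrite H0, H1. field_simplify; [|lra]. nra.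
Qed.

Lemma part_a rho xi I x y px py : 0 < rho < 1 -> trajectory rho xi I x y px py ->
  (-1 < xi < 0) ->
    exists c : R,
      (forall t, I t -> x t <= xstar xi /\
          cosh (y t - c) = cos (x t) / cos (xstar xi)) \/
      (forall t, I t -> PI - xstar xi <= x t /\
          cosh (y t - c) = cos (PI - x t) / cos (xstar xi)).
Proof.
  intros Hr Ht Hxi.
  destruct (Classical_Prop.classic (exists t0, I t0)) as [[t0 It0]|Hn].
  2:{ exists 0. left. intros t It. exfalso. eauto. }
  set (W0 := Wf x y px t0). set (V0 := Vf x y px t0).
  assert (HWV : W0 * V0 = 1 + xi) by exact (prodWV _ _ _ _ _ _ _ t0 Hr Ht It0).
  set (k := sqrt (1 + xi)).
  assert (Hk : 0 < k) by (apply sqrt_lt_R0; lra).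
  assert (Hkk : k * k = 1 + xi) by (apply sqrt_sqrt; lra).
  assert (Hk1 : k < 1) by nra.
  assert (Hxs : cos (xstar xi) = k).
  { unfold xstar. rewrite Rabs_left by lra. replace (1 - - xi) with (1 + xi) by ring.
    apply cos_acos. split; lra. }
  pose proof (acos_bound (sqrt (1 - Rabs xi))) as Hb. fold (xstar xi) in Hb.
  rewrite Hxs.
  destruct (Rlt_or_le 0 W0) as [HW|HW].
  - assert (HV : 0 < V0) by nra.
    exists (ln (k / W0)). left. intros t It.
    destruct (key _ _ _ _ _ _ _ t Hr Ht It) as (Hx0 & _ & _ & _ & Hc).
    assert (Wt : Wf x y px t = W0) by (apply (W_const _ _ _ _ _ _ _ Hr Ht); auto).
    assert (Vt : Vf x y px t = V0) by (apply (V_const _ _ _ _ _ _ _ Hr Ht); auto).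
    pose proof (exp_pos (y t)) as Ha.
    assert (E1 := cW x y px t). assert (E2 := cV x y px t). rewrite Wt in E1. rewrite Vt in E2.
    assert (Hv : 0 < V0 / exp (y t)) by (apply Rdiv_lt_0_compat; lra).
    assert (Hcp : 0 < cos (x t)) by nra.
    pose proof (sin2_cos2 (x t)). unfold Rsqr in *.
    assert (Hck : k <= cos (x t)) by nra.
    split.
    + apply Rnot_lt_le. intro Hlt.
      pose proof (cos_decreasing_1 (xstar xi) (x t) (proj1 Hb) (proj2 Hb) ltac:(lra) ltac:(lra) Hlt).
      lra.
    + rewrite cosh_alt, exp_ln by (apply Rdiv_lt_0_compat; lra).
      replace (cos (x t)) with ((exp (y t) * W0 + V0 / exp (y t)) / 2) by lra.
      replace V0 with (k * k / W0) by (rewrite Hkk, <- HWV; field; lra).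
      field. repeat split; lra.
  - assert (HW' : W0 < 0) by (destruct HW as [H|H]; [exact H| rewrite H in HWV; lra]).
    assert (HV : V0 < 0) by nra.
    exists (ln (k / - W0)). right. intros t It.
    destruct (key _ _ _ _ _ _ _ t Hr Ht It) as (Hx0 & _ & _ & _ & Hc).
    assert (Wt : Wf x y px t = W0) by (apply (W_const _ _ _ _ _ _ _ Hr Ht); auto).
    assert (Vt : Vf x y px t = V0) by (apply (V_const _ _ _ _ _ _ _ Hr Ht); auto).
    pose proof (exp_pos (y t)) as Ha.
    assert (E1 := cW x y px t). assert (E2 := cV x y px t). rewrite Wt in E1. rewrite Vt in E2.
    assert (Hv : V0 / exp (y t) < 0).
    { unfold Rdiv. apply Rmult_neg_pos; [lra| apply Rinv_0_lt_compat; lra]. }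
    assert (Hcp : cos (x t) < 0) by nra.
    pose proof (sin2_cos2 (x t)). unfold Rsqr in *.
    assert (Hck : k <= - cos (x t)) by nra.
    rewrite Rtrigo_facts.cos_pi_minus.
    split.
    + apply Rnot_lt_le. intro Hlt.
      pose proof (cos_decreasing_1 (xstar xi) (PI - x t) (proj1 Hb) (proj2 Hb) ltac:(lra) ltac:(lra) ltac:(lra)).
      rewrite Rtrigo_facts.cos_pi_minus in H0. lra.
    + rewrite cosh_alt, exp_ln by (apply Rdiv_lt_0_compat; lra).
      replace (cos (x t)) with ((exp (y t) * W0 + V0 / exp (y t)) / 2) by lra.
      replace V0 with (k * k / W0) by (rewrite Hkk, <- HWV; field; lra).
      field. repeat split; lra.
Qed.

Lemma part_b rho xi I x y px py : 0 < rho < 1 -> trajectory rho xi I x y px py ->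
  (xi < -1 ->
    exists (eps c : R), (eps = 1 \/ eps = -1) /\
      forall t, I t -> eps * px t < 0 /\
        eps * sinh (y t - c) = cos (x t) / sinh_theta xi).
Proof.
  intros Hr Ht Hxi.
  destruct (Classical_Prop.classic (exists t0, I t0)) as [[t0 It0]|Hn].
  2:{ exists 1, 0. split; [left; reflexivity|]. intros t It. exfalso. eauto. }
  set (W0 := Wf x y px t0). set (V0 := Vf x y px t0).
  assert (HWV : W0 * V0 = 1 + xi) by exact (prodWV _ _ _ _ _ _ _ t0 Hr Ht It0).
  set (m := sqrt (- xi - 1)).
  assert (Hm : 0 < m) by (apply sqrt_lt_R0; lra).
  assert (Hmm : m * m = - xi - 1) by (apply sqrt_sqrt; lra).
  assert (Hst : sinh_theta xi = m).
  { unfold sinh_theta. rewrite Rabs_left by lra. reflexivity. }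
  rewrite Hst.
  destruct (Rlt_or_le 0 W0) as [HW|HW].
  - assert (HV : V0 < 0) by nra.
    exists 1, (ln (m / W0)). split; [left; reflexivity|]. intros t It.
    destruct (key _ _ _ _ _ _ _ t Hr Ht It) as (Hx0 & _ & _ & _ & Hc).
    assert (Wt : Wf x y px t = W0) by (apply (W_const _ _ _ _ _ _ _ Hr Ht); auto).
    assert (Vt : Vf x y px t = V0) by (apply (V_const _ _ _ _ _ _ _ Hr Ht); auto).
    pose proof (exp_pos (y t)) as Ha.
    assert (E1 := cW x y px t). assert (E2 := cV x y px t). rewrite Wt in E1. rewrite Vt in E2.
    assert (Hv : V0 / exp (y t) < 0).
    { unfold Rdiv. apply Rmult_neg_pos; [lra| apply Rinv_0_lt_compat; lra]. }
    assert (Hs : 0 < sin (x t)) by (apply sin_gt_0; lra).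
    split.
    + assert (sin (x t) * px t < 0) by nra. nra.
    + rewrite sinh_alt, exp_ln by (apply Rdiv_lt_0_compat; lra).
      replace (cos (x t)) with ((exp (y t) * W0 + V0 / exp (y t)) / 2) by lra.
      replace V0 with ((1 + xi) / W0) by (rewrite <- HWV; field; lra). replace (1 + xi) with (- (m * m)) by lra.
      field. repeat split; lra.
  - assert (HW' : W0 < 0) by (destruct HW as [H|H]; [exact H| rewrite H in HWV; lra]).
    assert (HV : 0 < V0) by nra.
    exists (-1), (ln (m / - W0)). split; [right; reflexivity|]. intros t It.
    destruct (key _ _ _ _ _ _ _ t Hr Ht It) as (Hx0 & _ & _ & _ & Hc).
    assert (Wt : Wf x y px t = W0) by (apply (W_const _ _ _ _ _ _ _ Hr Ht); auto).
    assert (Vt : Vf x y px t = V0) by (apply (V_const _ _ _ _ _ _ _ Hr Ht); auto).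
    pose proof (exp_pos (y t)) as Ha.
    assert (E1 := cW x y px t). assert (E2 := cV x y px t). rewrite Wt in E1. rewrite Vt in E2.
    assert (Hv : 0 < V0 / exp (y t)) by (apply Rdiv_lt_0_compat; lra).
    assert (Hs : 0 < sin (x t)) by (apply sin_gt_0; lra).
    split.
    + assert (0 < sin (x t) * px t) by nra. nra.
    + rewrite sinh_alt, exp_ln by (apply Rdiv_lt_0_compat; lra).
      replace (cos (x t)) with ((exp (y t) * W0 + V0 / exp (y t)) / 2) by lra.
      replace V0 with ((1 + xi) / W0) by (rewrite <- HWV; field; lra). replace (1 + xi) with (- (m * m)) by lra.
      field. repeat split; lra.
Qed.

Lemma part_c rho xi I x y px py : 0 < rho < 1 -> trajectory rho xi I x y px py ->
  (xi = -1 ->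
    (forall t, I t -> x t = PI / 2) \/
    exists (eps c : R), (eps = 1 \/ eps = -1) /\
      forall t, I t -> x t <> PI / 2 /\ eps * px t * cos (x t) < 0 /\
        exp (eps * (y t - c)) = Rabs (cos (x t))).
Proof.
  intros Hr Ht Hxi.
  destruct (Classical_Prop.classic (exists t0, I t0)) as [[t0 It0]|Hn].
  2:{ left. intros t It. exfalso. eauto. }
  set (W0 := Wf x y px t0). set (V0 := Vf x y px t0).
  assert (HWV : W0 * V0 = 0) by (unfold W0, V0; rewrite (prodWV _ _ _ _ _ _ _ t0 Hr Ht It0); lra).
  destruct (Req_dec W0 0) as [HW|HW]; destruct (Req_dec V0 0) as [HV|HV].
  - left. intros t It.
    destruct (key _ _ _ _ _ _ _ t Hr Ht It) as (Hx0 & _ & _ & _ & Hc).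
    assert (Wt : Wf x y px t = W0) by (apply (W_const _ _ _ _ _ _ _ Hr Ht); auto).
    assert (Vt : Vf x y px t = V0) by (apply (V_const _ _ _ _ _ _ _ Hr Ht); auto).
    assert (E1 := cW x y px t). assert (E2 := cV x y px t). rewrite Wt, HW in E1. rewrite Vt, HV in E2.
    assert (Hc0 : cos (x t) = 0) by (unfold Rdiv in E2; lra).
    destruct (Rtotal_order (x t) (PI / 2)) as [H|[H|H]]; auto.
    + pose proof (cos_gt_0 (x t) ltac:(lra) H). lra.
    + pose proof (cos_lt_0 (x t) H ltac:(lra)). lra.
  -
    right. exists (-1), (ln (Rabs V0 / 2)). split; [right; reflexivity|]. intros t It.
    destruct (key _ _ _ _ _ _ _ t Hr Ht It) as (Hx0 & _ & _ & _ & Hc).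
    assert (Wt : Wf x y px t = W0) by (apply (W_const _ _ _ _ _ _ _ Hr Ht); auto).
    assert (Vt : Vf x y px t = V0) by (apply (V_const _ _ _ _ _ _ _ Hr Ht); auto).
    pose proof (exp_pos (y t)) as Ha.
    assert (E1 := cW x y px t). assert (E2 := cV x y px t). rewrite Wt, HW in E1. rewrite Vt in E2.
    assert (Hs : 0 < sin (x t)) by (apply sin_gt_0; lra).
    assert (Hcx : cos (x t) = V0 / exp (y t) / 2) by lra.
    assert (Hc0 : cos (x t) <> 0).
    { rewrite Hcx. unfold Rdiv. apply Rmult_integral_contrapositive_currified;
      [apply Rmult_integral_contrapositive_currified; [exact HV| apply Rinv_neq_0_compat; lra] | lra]. }
    assert (HaV : 0 < Rabs V0) by (apply Rabs_pos_lt; exact HV).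
    split; [|split].
    + intro Hp. rewrite Hp, cos_PI2 in Hc0. auto.
    + assert (sin (x t) * px t = cos (x t)) by lra.
      assert (0 < cos (x t) * cos (x t)) by (apply Rsqr_pos_lt; exact Hc0).
      nra.
    + replace (-1 * (y t - ln (Rabs V0 / 2))) with (ln (Rabs V0 / 2) - y t) by ring.
      rewrite exp_sub, exp_ln by lra. rewrite Hcx.
      unfold Rdiv. rewrite !Rabs_mult, (Rabs_pos_eq (/ exp (y t))), (Rabs_pos_eq (/ 2)).
      field. lra.
      left; apply Rinv_0_lt_compat; lra.
      left; apply Rinv_0_lt_compat; lra.
  -
    right. exists 1, (ln (2 / Rabs W0)). split; [left; reflexivity|]. intros t It.
    destruct (key _ _ _ _ _ _ _ t Hr Ht It) as (Hx0 & _ & _ & _ & Hc).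
    assert (Wt : Wf x y px t = W0) by (apply (W_const _ _ _ _ _ _ _ Hr Ht); auto).
    assert (Vt : Vf x y px t = V0) by (apply (V_const _ _ _ _ _ _ _ Hr Ht); auto).
    pose proof (exp_pos (y t)) as Ha.
    assert (E1 := cW x y px t). assert (E2 := cV x y px t). rewrite Wt in E1. rewrite Vt, HV in E2.
    assert (Hs : 0 < sin (x t)) by (apply sin_gt_0; lra).
    assert (E2' : cos (x t) + sin (x t) * px t = 0) by (rewrite E2; unfold Rdiv; ring).
    assert (Hcx : cos (x t) = exp (y t) * W0 / 2) by lra.
    assert (Hc0 : cos (x t) <> 0).
    { rewrite Hcx. unfold Rdiv. apply Rmult_integral_contrapositive_currified;
      [apply Rmult_integral_contrapositive_currified; [lra| exact HW] | lra]. }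
    assert (HaW : 0 < Rabs W0) by (apply Rabs_pos_lt; exact HW).
    split; [|split].
    + intro Hp. rewrite Hp, cos_PI2 in Hc0. auto.
    + assert (sin (x t) * px t = - cos (x t)) by lra.
      assert (0 < cos (x t) * cos (x t)) by (apply Rsqr_pos_lt; exact Hc0).
      nra.
    + rewrite Rmult_1_l, exp_sub, exp_ln by (apply Rdiv_lt_0_compat; lra). rewrite Hcx.
      unfold Rdiv. rewrite !Rabs_mult, (Rabs_pos_eq (exp (y t))), (Rabs_pos_eq (/ 2)).
      field. lra.
      left; apply Rinv_0_lt_compat; lra.
      left; lra.
  - exfalso. destruct (Rmult_integral _ _ HWV); auto.
Qed.

Theorem proposition3 (rho xi : R) (I : R -> Prop) (x y px py : R -> R) :
  0 < rho < 1 ->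
  trajectory rho xi I x y px py ->
  (* (a) *)
  ((-1 < xi < 0) ->
    exists c : R,
      (forall t, I t -> x t <= xstar xi /\
          cosh (y t - c) = cos (x t) / cos (xstar xi)) \/
      (forall t, I t -> PI - xstar xi <= x t /\
          cosh (y t - c) = cos (PI - x t) / cos (xstar xi))) /\
  (* (b) *)
  (xi < -1 ->
    exists (eps c : R), (eps = 1 \/ eps = -1) /\
      forall t, I t -> eps * px t < 0 /\
        eps * sinh (y t - c) = cos (x t) / sinh_theta xi) /\
  (* (c) *)
  (xi = -1 ->
    (forall t, I t -> x t = PI / 2) \/
    exists (eps c : R), (eps = 1 \/ eps = -1) /\
      forall t, I t -> x t <> PI / 2 /\ eps * px t * cos (x t) < 0 /\
        exp (eps * (y t - c)) = Rabs (cos (x t))).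
Proof.
  intros Hr Ht. split; [|split].
  - exact (part_a _ _ _ _ _ _ _ Hr Ht).
  - exact (part_b _ _ _ _ _ _ _ Hr Ht).
  - exact (part_c _ _ _ _ _ _ _ Hr Ht).
Qed.
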